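(* In the bilevel setting of the context, suppose (A1), (A2), (A3) hold, $(x^*,y^* )$ is a bi-local solution of (BP), and MSCQ for $\Omega_1$ holds at $x^*$. Then $d_x=0$ is an optimal solution of the problem $$\min_{d_x}\ \nabla_xF(x^*,y^* )^Td_x+\nabla_yF(x^*,y^* )^Ty'(x^*;d_x)$$ subject to $\nabla_xH_i(x^*,y^* )^Td_x+\nabla_yH_i(x^*,y^* )^Ty'(x^*;d_x)=0$, $i\in[p]$, and $\nabla_xG_i(x^*,y^* )^Td_x+\nabla_yG_i(x^*,y^* )^Ty'(x^*;d_x)\le0$, $i\in I_G$.
   Context: Bilevel program (BP): $\min F(x,y)$ s.t. $H(x,y)=0$, $G(x,y)\le0$, $y\in S(x)$, $S(x)$ the solution set of $(P_x)$: $\min_yf(x,y)$ s.t. $h(x,y)=0$, $g(x,y)\le0$; on $\mathbb{R}^n\times\mathbb{R}^m$, $F,f$ scalar, $G\to\mathbb{R}^q$, $H\to\mathbb{R}^p$, $g\to\mathbb{R}^s$, $h\to\mathbb{R}^r$; $f,g,h\in C^3$, $F,G,H\in C^2$ around $(x^*,y^* )$. $Y(x)=\{y:h(x,y)=0,g(x,y)\le0\}$, $\Phi=\{(x,y):H=0,G\le0\}$, $I_G=\{i\in[q]:G_i(x^*,y^* )=0\}$, $\mathcal{L}=f+\mu^Th+\xi^Tg$, $\Lambda_{x^*}(y^* )$ = KKT multipliers $(\mu,\xi)$: $\nabla_y\mathcal{L}(x^*;y^*,\mu,\xi)=0$, $h(x^*,y^* )=0$, $0\le\xi\perp g(x^*,y^*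 )\le0$; assume $y^*\in Y(x^* )$, $\Lambda_{x^*}(y^* )\ne\emptyset$; $I_{x^*}(y^* )=\{i:g_i(x^*,y^* )=0\}$. (A1) MFCQ: $\{\nabla_yh_i(x^*,y^* )\}$ lin. independent and some $d_y$ has $\mathcal{J}_yh(x^*,y^* )d_y=0$, $\nabla_yg_i(x^*,y^* )^Td_y<0$, $i\in I_{x^*}(y^* )$. (A2) SSOSC: for all $(\mu^*,\xi^* )\in\Lambda_{x^*}(y^* )$, $d_y^T\nabla^2_{yy}\mathcal{L}(x^*;y^*,\mu^*,\xi^* )d_y>0$ for $d_y\ne0$ with $\mathcal{J}_yh(x^*,y^* )d_y=0$, $\nabla_yg_i(x^*,y^* )^Td_y=0$ when $g_i(x^*,y^* )=0,\xi^*_i>0$. (A3) CRCQ: near $(x^*,y^* )$, for all $I\subseteq I_{x^*}(y^* )$, $J\subseteq[r]$, $\{\nabla_yh_i(x,y)\}_{J}\cup\{\nabla_yg_i(x,y)\}_I$ has constant rank. Under (A1)–(A3) there is a locally Lipschitz, directionally differentiable map $y(\cdot)$ on a ball $\mathbb{B}_\delta(x^* )$, $y(x^* )=y^*$, with $y(x)$ the unique local solution of $(P_x)$ in a ball $\mathbb{B}_\varepsilon(y^* )$; $y'(x;d)=\lim_{t\downarrow0}(y(x+td)-y(x))/t$. $\Omega_1=\{x:H(x,y(x))=0,G(x,y(x))\le0\}$. MSCQ for $\Omega_1$ at $x^*$: $\mathrm{dist}(x,\Omega_1)\le\kappa\,\mathrm{dist}((H(x,y(x)),G(x,y(x))),\{0\}^p\times\mathbb{R}^q_-)$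 for $x$ near $x^*$, some $\kappa>0$. Bi-local solution: $(x^*,y^* )\in\Phi$ with $\delta,\varepsilon>0$ such that $y^*$ minimizes $f(x^*,\cdot)$ on $Y(x^* )\cap\mathbb{B}_\varepsilon(y^* )$ and $F(x^*,y^* )\le F(x,y)$ whenever $x\in\mathbb{B}_\delta(x^* )$, $(x,y)\in\Phi$, $y\in\arg\min\{f(x,y'):y'\in Y(x)\cap\mathbb{B}_\varepsilon(y^* )\}$. *)

(* Defs.v *)
From HB Require Import structures.
From mathcomp Require Import all_boot all_order all_algebra.
From mathcomp Require Import all_classical all_reals all_analysis.
Set Implicit Arguments. Unset Strict Implicit. Unset Printing Implicit Defensive.
Import Order.TTheory GRing.Theory Num.Theory.
Import numFieldNormedType.Exports.
Local Open Scope classical_set_scope.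
Local Open Scope ring_scope.

Section BilevelDefs.
Variable R : realType.

Definition enorm k (v : 'rV[R]_k) : R := Num.sqrt (\sum_(i < k) v 0 i ^+ 2).
Definition cball k (c : 'rV[R]_k) (rad : R) : set 'rV[R]_k :=
  [set z | enorm (z - c) <= rad].
Definition setdist k (v : 'rV[R]_k) (A : set 'rV[R]_k) : R :=
  inf [set enorm (v - a) | a in A].

Definition dot k (u v : 'rV[R]_k) : R := \sum_(i < k) u 0 i * v 0 i.

Definition evec N (i : 'I_N) : 'rV[R]_N := delta_mx 0 i.
Definition pd N (f : 'rV[R]_N -> R) (i : 'I_N) (z : 'rV[R]_N) : R :=
  derive f z (evec i).
Fixpoint iterD N (s : seq 'I_N) (f : 'rV[R]_N -> R) : 'rV[R]_N -> R :=
  match s with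
  | [::] => f
  | i :: s' => pd (iterD s' f) i
  end.

Definition Ck N (k : nat) (f : 'rV[R]_N -> R) (z0 : 'rV[R]_N) : Prop :=
  exists rho : R, 0 < rho /\
    forall s : seq 'I_N, (size s <= k)%N ->
      {within cball z0 rho, continuous (iterD s f)} /\
      ((size s < k)%N -> forall z, cball z0 rho z ->
          forall i, derivable (iterD s f) z (evec i)).

Definition unc n m (F : 'rV[R]_n -> 'rV[R]_m -> R) : 'rV[R]_(n + m) -> R :=
  fun z => F (lsubmx z) (rsubmx z).
Definition comp n m k (G : 'rV[R]_n -> 'rV[R]_m -> 'rV[R]_k) (i : 'I_k)
  : 'rV[R]_n -> 'rV[R]_m -> R := fun x y => G x y 0 i.

Definition CkF n m k (F : 'rV[R]_n -> 'rV[R]_m -> R) x y :=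
  Ck k (unc F) (row_mx x y).
Definition CkV n m l k (G : 'rV[R]_n -> 'rV[R]_m -> 'rV[R]_l) x y :=
  forall i, CkF k (comp G i) x y.

Definition gradx n m (F : 'rV[R]_n -> 'rV[R]_m -> R) x y : 'rV[R]_n :=
  \row_(i < n) pd (unc F) (lshift m i) (row_mx x y).
Definition grady n m (F : 'rV[R]_n -> 'rV[R]_m -> R) x y : 'rV[R]_m :=
  \row_(j < m) pd (unc F) (rshift n j) (row_mx x y).
Definition hessyy n m (F : 'rV[R]_n -> 'rV[R]_m -> R) x y : 'M[R]_m :=
  \matrix_(i < m, j < m) iterD [:: rshift n i; rshift n j] (unc F) (row_mx x y).

Variables (n m p q r s : nat).
Notation fun_s := ('rV[R]_n -> 'rV[R]_m -> R).
Notation fun_v k := ('rV[R]_n -> 'rV[R]_m -> 'rV[R]_k).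

Definition lag (f : fun_s) (h : fun_v r) (g : fun_v s)
  (mu : 'rV[R]_r) (xi : 'rV[R]_s) : fun_s :=
  fun x y => f x y + \sum_(i < r) mu 0 i * h x y 0 i + \sum_(i < s) xi 0 i * g x y 0 i.

Definition Yset (h : fun_v r) (g : fun_v s) (x : 'rV[R]_n) : set 'rV[R]_m :=
  fun y => (forall i, h x y 0 i = 0) /\ (forall i, g x y 0 i <= 0).

Definition Phi (H : fun_v p) (G : fun_v q) (x : 'rV[R]_n) (y : 'rV[R]_m) : Prop :=
  (forall i, H x y 0 i = 0) /\ (forall i, G x y 0 i <= 0).

Definition KKTmult (f : fun_s) (h : fun_v r) (g : fun_v s) x y
  : set ('rV[R]_r * 'rV[R]_s) :=
  fun mx => grady (lag f h g mx.1 mx.2) x y = 0 /\ (forall i, h x y 0 i = 0) /\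
            (forall i, 0 <= mx.2 0 i /\ g x y 0 i <= 0 /\ mx.2 0 i * g x y 0 i = 0).

Definition MFCQ (h : fun_v r) (g : fun_v s) x y : Prop :=
  row_free (\matrix_(i < r) grady (comp h i) x y) /\
  exists dy : 'rV[R]_m,
    (forall i, dot (grady (comp h i) x y) dy = 0) /\
    (forall i, g x y 0 i = 0 -> dot (grady (comp g i) x y) dy < 0).

Definition SSOSC (f : fun_s) (h : fun_v r) (g : fun_v s) x y : Prop :=
  forall mu xi, KKTmult f h g x y (mu, xi) ->
  forall dy : 'rV[R]_m, dy != 0 ->
    (forall i, dot (grady (comp h i) x y) dy = 0) ->
    (forall i, g x y 0 i = 0 -> 0 < xi 0 i -> dot (grady (comp g i) x y) dy = 0) ->
    0 < (dy *m hessyy (lag f h g mu xi) x y *m dy^T) 0 0.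

(* the family {grad_y h_j}_{j in J} u {grad_y g_i}_{i in I}, as the rows of a
   matrix (rows outside J, I are zero, which does not affect the rank) *)
Definition famCR (h : fun_v r) (g : fun_v s) (J : {set 'I_r}) (I : {set 'I_s}) x y
  : 'M[R]_(r + s, m) :=
  col_mx (\matrix_(j < r) (if j \in J then grady (comp h j) x y else 0))
         (\matrix_(i < s) (if i \in I then grady (comp g i) x y else 0)).

Definition CRCQ (h : fun_v r) (g : fun_v s) xs ys : Prop :=
  exists rho : R, 0 < rho /\
    forall (I : {set 'I_s}) (J : {set 'I_r}),
      I \subset [set i | g xs ys 0 i == 0] ->
      forall x y, cball xs rho x -> cball ys rho y ->
        \rank (famCR h g J I x y) = \rank (famCR h g J I xs ys).

Definition ydir (ym : 'rV[R]_n -> 'rV[R]_m) (x d : 'rV[R]_n) : 'rV[R]_m :=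
  lim ((fun t : R => t^-1 *: (ym (x + t *: d) - ym x)) @ 0^'+).

Definition sol_map (f : fun_s) (h : fun_v r) (g : fun_v s) xs ys
  (delta eps : R) (ym : 'rV[R]_n -> 'rV[R]_m) : Prop :=
  0 < delta /\ 0 < eps /\ ym xs = ys /\
  (forall x0, enorm (x0 - xs) < delta -> exists rho L : R, 0 < rho /\
     forall x1 x2, enorm (x1 - x0) <= rho -> enorm (x2 - x0) <= rho ->
       enorm (ym x1 - ym x2) <= L * enorm (x1 - x2)) /\
  (forall x, enorm (x - xs) < delta -> forall d : 'rV[R]_n,
     cvg ((fun t : R => t^-1 *: (ym (x + t *: d) - ym x)) @ 0^'+)) /\
  (forall x, cball xs delta x ->
     (Yset h g x `&` cball ys eps) (ym x) /\
     (forall y, (Yset h g x `&` cball ys eps) y -> f x (ym x) <= f x y) /\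
     (forall y, (Yset h g x `&` cball ys eps) y ->
        (forall y', (Yset h g x `&` cball ys eps) y' -> f x y <= f x y') ->
        y = ym x)).

Definition Omega1 (H : fun_v p) (G : fun_v q) (ym : 'rV[R]_n -> 'rV[R]_m)
  : set 'rV[R]_n := [set x | Phi H G x (ym x)].

Definition coneK : set 'rV[R]_(p + q) :=
  fun v => lsubmx v = 0 /\ forall i, rsubmx v 0 i <= 0.

Definition MSCQ (H : fun_v p) (G : fun_v q) (ym : 'rV[R]_n -> 'rV[R]_m) xs : Prop :=
  exists kappa rho : R, 0 < kappa /\ 0 < rho /\
    forall x, cball xs rho x ->
      setdist x (Omega1 H G ym) <=
        kappa * setdist (row_mx (H x (ym x)) (G x (ym x))) coneK.

Definition bilocal (F : fun_s) (H : fun_v p) (G : fun_v q)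
  (f : fun_s) (h : fun_v r) (g : fun_v s) xs ys (delta eps : R) : Prop :=
  0 < delta /\ 0 < eps /\ Phi H G xs ys /\
  (Yset h g xs `&` cball ys eps) ys /\
  (forall y, (Yset h g xs `&` cball ys eps) y -> f xs ys <= f xs y) /\
  (forall x y, cball xs delta x -> Phi H G x y ->
     (Yset h g x `&` cball ys eps) y ->
     (forall y', (Yset h g x `&` cball ys eps) y' -> f x y <= f x y') ->
     F xs ys <= F x y).

Definition lin_obj (F : fun_s) (ym : 'rV[R]_n -> 'rV[R]_m) xs ys (d : 'rV[R]_n) : R :=
  dot (gradx F xs ys) d + dot (grady F xs ys) (ydir ym xs d).
Definition lin_feas (H : fun_v p) (G : fun_v q) (ym : 'rV[R]_n -> 'rV[R]_m) xs ys
  (d : 'rV[R]_n) : Prop :=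
  (forall i, dot (gradx (comp H i) xs ys) d + dot (grady (comp H i) xs ys) (ydir ym xs d) = 0) /\
  (forall i, G xs ys 0 i = 0 ->
     dot (gradx (comp G i) xs ys) d + dot (grady (comp G i) xs ys) (ydir ym xs d) <= 0).

End BilevelDefs.

(* Main.v *)
Require Import Defs.
From HB Require Import structures.
From mathcomp Require Import all_boot all_order all_algebra.
From mathcomp Require Import all_classical all_reals all_analysis.
From mathcomp Require Import lra ring.
Import Order.TTheory GRing.Theory Num.Theory.
Import numFieldNormedType.Exports.
Local Open Scope classical_set_scope.
Local Open Scope ring_scope.
Lemma entry_le_norm {R : realType} {k} (v : 'rV[R]_k) i : `|v 0 i| <= `|v|.
Proof.
rewrite [leRHS]/Num.Def.normr /= mx_normrE.
by apply: le_trans (le_bigmax _ _ (0, i)); rewrite /=.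
Qed.

Lemma norm_le_entries {R : realType} {k} (v : 'rV[R]_k) (e : R) :
  0 <= e -> (forall i, `|v 0 i| <= e) -> `|v| <= e.
Proof.
move=> e0 H; rewrite [leLHS]/Num.Def.normr /= mx_normrE.
apply: bigmax_le => // -[a b] _ /=; rewrite (ord1 a); exact: H.
Qed.

Lemma enorm_ge0 {R : realType} {k} (v : 'rV[R]_k) : 0 <= enorm v.
Proof. exact: sqrtr_ge0. Qed.

Lemma entry_le_enorm {R : realType} {k} (v : 'rV[R]_k) i : `|v 0 i| <= enorm v.
Proof.
rewrite /enorm -sqrtr_sqr ler_wsqrtr //.
rewrite (bigD1 i) //= lerDl; apply: sumr_ge0 => j _; exact: sqr_ge0.
Qed.

Lemma norm_le_enorm {R : realType} {k} (v : 'rV[R]_k) : `|v| <= enorm v.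
Proof. apply: norm_le_entries; [exact: enorm_ge0 | exact: entry_le_enorm]. Qed.

Lemma enorm_le_norm {R : realType} {k} (v : 'rV[R]_k) : enorm v <= k%:R * `|v|.
Proof.
rewrite /enorm -(ger0_norm (_ : 0 <= k%:R * `|v|)); last first.
  by apply: mulr_ge0 => //.
rewrite -sqrtr_sqr ler_wsqrtr //.
apply: (@le_trans _ _ (\sum_(i < k) `|v|^+2)).
  apply: ler_sum => i _; rewrite -real_normK ?num_real //.
  by rewrite lerXn2r ?nnegrE ?entry_le_norm.
rewrite sumr_const card_ord exprMn -[leLHS]mulr_natr [leRHS]mulrC; apply: ler_wpM2l; first exact: sqr_ge0.
case: k {v} => [|k]; first by rewrite expr0n.
by rewrite -natrX ler_nat expnS leq_pmulr // expn_gt0.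
Qed.

Lemma norm_row_mx {R : realType} {a b} (u : 'rV[R]_a) (w : 'rV[R]_b) :
  `|row_mx u w| <= `|u| + `|w|.
Proof.
apply: norm_le_entries; first by apply: addr_ge0.
move=> i; have [j ->|j ->] := split_ordP i.
  rewrite row_mxEl; apply: (le_trans (entry_le_norm u j)).
  by rewrite lerDl.
rewrite row_mxEr; apply: (le_trans (entry_le_norm w j)).
by rewrite lerDr.
Qed.
Lemma line_quot {R : realType} {N} (phi : 'rV[R]_N -> R) (w e : 'rV[R]_N) (u : R) :
  (fun h : R => h^-1 *: (((fun t : R => phi (w + t *: e)) \o shift u) (h *: 1) - phi (w + u *: e)))
  = (fun h : R => h^-1 *: ((phi \o shift (w + u *: e)) (h *: e) - phi (w + u *: e))).
Proof.
apply/funext => h /=; congr (_ *: (_ - _)); congr phi.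
by rewrite /shift /= scaler1 scalerDl addrCA.
Qed.

Lemma line_derivable {R : realType} {N} (phi : 'rV[R]_N -> R) (w e : 'rV[R]_N) (u : R) :
  derivable phi (w + u *: e) e ->
  derivable (fun t : R => phi (w + t *: e)) u 1 /\
  'D_1 (fun t : R => phi (w + t *: e)) u = 'D_e phi (w + u *: e).
Proof.
rewrite /derivable /derive line_quot => H; split => //.
Qed.
Lemma mvt_line {R : realType} {N} (phi : 'rV[R]_N -> R) (w e : 'rV[R]_N) (a : R) :
  (forall u, (0 <= u <= a) \/ (a <= u <= 0) -> derivable phi (w + u *: e) e) ->
  exists th, ((0 <= th <= a) \/ (a <= th <= 0)) /\
    phi (w + a *: e) - phi w = a * 'D_e phi (w + th *: e).
Proof.
move=> Hd.
set g := fun t : R => phi (w + t *: e).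
have g0 : phi w = g 0 by rewrite /g scale0r addr0.
have gd : forall u, (0 <= u <= a) \/ (a <= u <= 0) ->
    is_derive u 1 g ('D_e phi (w + u *: e)).
  move=> u /Hd /line_derivable [H1 H2]; exact: DeriveDef.
rewrite g0 -/(g a).
case: (leP 0 a) => ha.
  have D1 : forall x, x \in `]0, a[ -> is_derive x 1 g ('D_e phi (w + x *: e)).
    move=> x; rewrite in_itv /= => /andP[x0 xa]; apply: gd; left.
    by rewrite !ltW.
  have C1 : {within `[0, a], continuous g}.
    apply: derivable_within_continuous => x; rewrite in_itv /= => hx.
    by have [] := @line_derivable R N phi w e x (Hd x (or_introl hx)).
  have [c] := @MVT_segment R g (fun t => 'D_e phi (w + t *: e)) 0 a ha D1 C1.
  rewrite in_itv /= => hc ->; exists c; split; first by left.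
  by rewrite subr0 mulrC.
have D1 : forall x, x \in `]a, 0[ -> is_derive x 1 g ('D_e phi (w + x *: e)).
  move=> x; rewrite in_itv /= => /andP[x0 xa]; apply: gd; right.
  by rewrite !ltW.
have C1 : {within `[a, 0], continuous g}.
  apply: derivable_within_continuous => x; rewrite in_itv /= => hx.
  by have [] := @line_derivable R N phi w e x (Hd x (or_intror hx)).
have [c] := @MVT_segment R g (fun t => 'D_e phi (w + t *: e)) a 0 (ltW ha) D1 C1.
rewrite in_itv /= => hc E; exists c; split; first by right.
by apply: (@oppr_inj _); rewrite opprB E sub0r mulrN mulrC.
Qed.
Definition pathpt {R : realType} {N} (z1 z2 : 'rV[R]_N) (j : nat) : 'rV[R]_N :=
  \row_k (if (k < j)%N then z1 0 k else z2 0 k).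

Lemma evecE {R : realType} {N} (j k : 'I_N) : @evec R N j 0 k = (j == k)%:R.
Proof. by rewrite /evec mxE eqxx /= eq_sym. Qed.

Lemma pathptS {R : realType} {N} (z1 z2 : 'rV[R]_N) (j : 'I_N) :
  pathpt z1 z2 j.+1 = pathpt z1 z2 j + (z1 0 j - z2 0 j) *: evec R j.
Proof.
apply/rowP => k; rewrite !mxE eqxx /=.
case: (ltngtP k j) => H.
- rewrite ltnS ltnW //.
  have -> : (k == j) = false by apply/negbTE; rewrite neq_ltn H.
  by rewrite mulr0 addr0.
- rewrite ltnS leqNgt H /=.
  have -> : (k == j) = false by apply/negbTE; rewrite neq_ltn H orbT.
  by rewrite mulr0 addr0.
- have -> : k = j by apply: val_inj.
  by rewrite ltnSn eqxx mulr1 addrC subrK.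
Qed.

Lemma pathpt0 {R : realType} {N} (z1 z2 : 'rV[R]_N) : pathpt z1 z2 0 = z2.
Proof. by apply/rowP => k; rewrite !mxE. Qed.

Lemma pathptN {R : realType} {N} (z1 z2 : 'rV[R]_N) : pathpt z1 z2 N = z1.
Proof. by apply/rowP => k; rewrite !mxE ltn_ord. Qed.

Lemma pathpt_box {R : realType} {N} (z0 z1 z2 : 'rV[R]_N) (del : R) j :
  `|z1 - z0| <= del -> `|z2 - z0| <= del -> `|pathpt z1 z2 j - z0| <= del.
Proof.
move=> h1 h2; apply: norm_le_entries.
  by apply: le_trans h1; exact: normr_ge0.
move=> k; rewrite !mxE; case: ifP => _.
  by apply: le_trans h1; have := entry_le_norm (z1 - z0) k; rewrite !mxE.
by apply: le_trans h2; have := entry_le_norm (z2 - z0) k; rewrite !mxE.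
Qed.

Lemma seg_box {R : realType} {N} (z0 P : 'rV[R]_N) (j : 'I_N) (a th del : R) :
  `|P - z0| <= del -> `|P + a *: evec R j - z0| <= del ->
  (0 <= th <= a) \/ (a <= th <= 0) ->
  `|P + th *: evec R j - z0| <= del.
Proof.
move=> h1 h2 hth; apply: norm_le_entries.
  by apply: le_trans h1; exact: normr_ge0.
move=> k; case: (eqVneq k j) => [->|hkj].
  have e1 := entry_le_norm (P - z0) j.
  have e2 := entry_le_norm (P + a *: evec R j - z0) j.
  rewrite !mxE in e1; rewrite !mxE !eqxx /= mulr1 in e2; rewrite !mxE !eqxx /= mulr1.
  have f1 := le_trans e1 h1; have f2 := le_trans e2 h2.
  move: f1 f2; rewrite !ler_norml => /andP[f1 f1'] /andP[f2 f2'].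
  case: hth => /andP[t1 t2]; apply/andP; split; lra.
have e1 := entry_le_norm (P - z0) k.
rewrite !mxE in e1; rewrite !mxE !eqxx /= (negbTE hkj) mulr0 addr0.
exact: le_trans e1 h1.
Qed.

Arguments seg_box {R N z0 P j a th del}.
Lemma enorm0 {R : realType} {k} : enorm (0 : 'rV[R]_k) = 0.
Proof.
rewrite /enorm big1 ?sqrtr0 // => i _; by rewrite mxE expr0n.
Qed.

Definition gradv {R : realType} {N} (phi : 'rV[R]_N -> R) (z0 : 'rV[R]_N) : 'rV[R]_N :=
  \row_k pd phi k z0.

Lemma unif_cont {R : realType} {N} (phi : 'rV[R]_N -> R) z0 rho eps :
  0 < rho -> 0 < eps ->
  (forall k, {within cball z0 rho, continuous (pd phi k)}) ->
  exists2 d0, 0 < d0 & forall z, `|z0 - z| < d0 -> cball z0 rho z ->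
     forall k, `|pd phi k z0 - pd phi k z| <= eps.
Proof.
move=> rho0 eps0 Hc.
have z0in : cball z0 rho z0 by rewrite /cball /= subrr enorm0 ltW.
have : \forall z \near within (cball z0 rho) (nbhs z0),
    forall k, `|pd phi k z0 - pd phi k z| <= eps.
  apply: filter_forall => k.
  have := (subspace_continuousP _ _).1 (Hc k) z0 z0in.
  by move/cvgrPdist_le => /(_ eps eps0).
rewrite /within /= => /nbhs_normP [d0 d00 Hd].
exists d0 => // z zz cz; apply: Hd => //.
Qed.
Lemma SD {R : realType} {N} (phi : 'rV[R]_N -> R) z0 rho : 0 < rho ->
  (forall z, cball z0 rho z -> forall k, derivable phi z (evec R k)) ->
  (forall k, {within cball z0 rho, continuous (pd phi k)}) ->
  forall eps, 0 < eps -> exists2 del, 0 < del & forall z1 z2,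
    `|z1 - z0| <= del -> `|z2 - z0| <= del ->
    `|phi z1 - phi z2 - dot (gradv phi z0) (z1 - z2)| <= eps * `|z1 - z2|.
Proof.
move=> rho0 Hd Hc eps eps0.
set e' := eps / N.+1%:R.
have e'0 : 0 < e' by rewrite /e' divr_gt0 // ltr0Sn.
have [d0 d00 Hu] := unif_cont phi z0 rho e' rho0 e'0 Hc.
set del := Order.min (d0 / 2) (rho / N.+1%:R).
have del0 : 0 < del by rewrite /del lt_min !divr_gt0 // ltr0Sn.
exists del => // z1 z2 h1 h2.
have inbox : forall xi, `|xi - z0| <= del -> cball z0 rho xi /\ `|z0 - xi| < d0.
  move=> xi hxi; split.
    rewrite /cball /=; apply: le_trans (enorm_le_norm _) _.
    have : `|xi - z0| <= rho / N.+1%:R by apply: le_trans hxi _; rewrite /del ge_min lexx orbT.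
    rewrite ler_pdivlMr ?ltr0Sn // => H.
    apply: le_trans (_ : `|xi - z0| * N.+1%:R <= rho) => //.
    by rewrite mulrC; apply: ler_wpM2l => //; rewrite ler_nat.
  have dd : del < d0.
    have : del <= d0 / 2 by rewrite /del ge_min lexx.
    have : d0 / 2 < d0 by rewrite ltr_pdivrMr // ltr_pMr // ltr1n.
    lra.
  rewrite distrC; lra.
set P := pathpt z1 z2.
have E : phi z1 - phi z2 - dot (gradv phi z0) (z1 - z2) =
    \sum_(j < N) (phi (P j.+1) - phi (P j) - pd phi j z0 * (z1 0 j - z2 0 j)).
  rewrite sumrB; congr (_ - _).
    rewrite -(big_mkord xpredT (fun j => phi (P j.+1) - phi (P j))).
    by rewrite telescope_sumr // /P pathptN pathpt0.
  by rewrite /dot; apply: eq_bigr => j _; rewrite !mxE.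
rewrite E; apply: le_trans (ler_norm_sum _ _ _) _.
apply: (@le_trans _ _ (\sum_(j < N) e' * `|z1 - z2|)).
  apply: ler_sum => j _.
  set a := z1 0 j - z2 0 j.
  have hP : `|P j - z0| <= del by exact: pathpt_box.
  have hP' : `|P j + a *: evec R j - z0| <= del by rewrite -pathptS; exact: pathpt_box.
  rewrite /P pathptS -/P -/a.
  have [th [hth ->]] : exists th, ((0 <= th <= a) \/ (a <= th <= 0)) /\
      phi (P j + a *: evec R j) - phi (P j) = a * 'D_(evec R j) phi (P j + th *: evec R j).
    apply: mvt_line => u hu.
    exact: Hd _ (inbox _ (seg_box hP hP' hu)).1 j.
  have [c1 c2] := inbox _ (seg_box hP hP' hth).
  have := Hu _ c2 c1 j.
  rewrite /pd => hd.
  rewrite [_ * a]mulrC -mulrBr normrM mulrC distrC.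
  apply: ler_pM => //.
  by have := entry_le_norm (z1 - z2) j; rewrite !mxE.
rewrite sumr_const card_ord -mulr_natl mulrA.
apply: ler_wpM2r => //.
rewrite /e' mulrA ler_pdivrMr ?ltr0Sn // mulrC.
by apply: ler_wpM2l; [exact: ltW | rewrite ler_nat].
Qed.
Lemma unc_row {R : realType} {n m} (phi : 'rV[R]_n -> 'rV[R]_m -> R) x y :
  unc phi (row_mx x y) = phi x y.
Proof. by rewrite /unc row_mxKl row_mxKr. Qed.

Lemma dotB {R : realType} {k} (c a b : 'rV[R]_k) : dot c (a - b) = dot c a - dot c b.
Proof. by rewrite /dot -sumrB; apply: eq_bigr => i _; rewrite !mxE mulrBr. Qed.

Lemma dotZ {R : realType} {k} (c a : 'rV[R]_k) (t : R) : dot c (t *: a) = t * dot c a.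
Proof.
rewrite /dot mulr_sumr; apply: eq_bigr => i _; rewrite !mxE.
by rewrite mulrCA.
Qed.

Lemma dot0 {R : realType} {k} (c : 'rV[R]_k) : dot c 0 = 0.
Proof. by rewrite /dot big1 // => i _; rewrite mxE mulr0. Qed.

Definition gsum {R : realType} {k} (c : 'rV[R]_k) : R := \sum_(i < k) `|c 0 i|.

Lemma gsum_ge0 {R : realType} {k} (c : 'rV[R]_k) : 0 <= gsum c.
Proof. by apply: sumr_ge0 => i _. Qed.

Lemma dot_bound {R : realType} {k} (c x : 'rV[R]_k) : `|dot c x| <= gsum c * `|x|.
Proof.
rewrite /dot /gsum mulr_suml; apply: (le_trans (ler_norm_sum _ _ _)).
apply: ler_sum => i _; rewrite normrM; apply: ler_wpM2l => //.
exact: entry_le_norm.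
Qed.

Lemma dot_grad {R : realType} {n m} (phi : 'rV[R]_n -> 'rV[R]_m -> R) x y a b :
  dot (gradv (unc phi) (row_mx x y)) (row_mx a b) =
  dot (gradx phi x y) a + dot (grady phi x y) b.
Proof.
rewrite /dot big_split_ord; congr (_ + _); apply: eq_bigr => i _.
  by rewrite row_mxEl !mxE.
by rewrite row_mxEr !mxE.
Qed.

Lemma est1 {R : realType} {N} (phi : 'rV[R]_N -> R) (c z0 zt w w' : 'rV[R]_N)
    (t g W K : R) :
  0 <= t -> 0 <= g -> gsum c <= K ->
  zt - z0 = t *: w' -> `|w'| <= W -> `|w' - w| <= g ->
  `|phi zt - phi z0 - dot c (zt - z0)| <= g * `|zt - z0| ->
  `|phi zt - phi z0 - t * dot c w| <= t * (g * (K + W)).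
Proof.
move=> t0 g0 hK hz hw' hww hSD.
have -> : phi zt - phi z0 - t * dot c w =
   (phi zt - phi z0 - dot c (zt - z0)) + t * dot c (w' - w).
  by rewrite hz dotZ dotB mulrBr addrA subrK.
apply: (le_trans (ler_normD _ _)).
rewrite hz normrZ ger0_norm // in hSD.
have h2 : `|t * dot c (w' - w)| <= t * (K * g).
  rewrite normrM ger0_norm //; apply: ler_wpM2l => //.
  apply: (le_trans (dot_bound _ _)).
  apply: ler_pM => //; exact: gsum_ge0.
have h3 : g * (t * `|w'|) <= t * (g * W).
  rewrite mulrCA; apply: ler_wpM2l => //; apply: ler_wpM2l => //.
have H := lerD (le_trans hSD h3) h2.
have E : t * (g * (K + W)) = t * (g * W) + t * (K * g).
  by rewrite mulrDr mulrDr [g * K]mulrC addrC.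
by rewrite hz E.
Qed.

Lemma small_t {R : realType} (C r : R) : 0 < r -> \forall t \near 0^'+, t * C <= r.
Proof.
move=> r0.
have h : 0 < r / (`|C| + 1) by rewrite divr_gt0 // ltr_wpDl.
near=> t.
have t0 : 0 < t by near: t; exact: nbhs_right_gt.
have t1 : t < r / (`|C| + 1) by near: t; exact: nbhs_right_lt.
move: t1; rewrite ltr_pdivlMr ?ltr_wpDl // => t1.
apply: le_trans (_ : t * `|C| <= r).
  by apply: ler_wpM2l; [exact: ltW | exact: ler_norm].
have : 0 <= `|C| by [].
nra.
Unshelve. all: by end_near.
Qed.
Arguments est1 {R N phi c z0 zt w w' t g W K}.
Lemma Ck_hyp {R : realType} {N} {k} (phi : 'rV[R]_N -> R) z0 : (0 < k)%N -> Ck k phi z0 ->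
  exists2 rho, 0 < rho &
    (forall z, cball z0 rho z -> forall i, derivable phi z (evec R i)) /\
    (forall i, {within cball z0 rho, continuous (pd phi i)}).
Proof.
move=> k0 [rho [rho0 H]]; exists rho => //; split.
  move=> z hz i; have [_ h] := H [::] (leq0n k); exact: (h k0 z hz i).
move=> i; have [h _] := H [:: i] k0; exact: h.
Qed.

Lemma SDk {R : realType} {N} {k} (phi : 'rV[R]_N -> R) z0 : (0 < k)%N -> Ck k phi z0 ->
  forall eps, 0 < eps -> exists2 del, 0 < del & forall z1 z2,
    `|z1 - z0| <= del -> `|z2 - z0| <= del ->
    `|phi z1 - phi z2 - dot (gradv phi z0) (z1 - z2)| <= eps * `|z1 - z2|.
Proof.
move=> k0 hC; have [rho rho0 [Hd Hc]] := Ck_hyp _ _ k0 hC.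
exact: SD rho0 Hd Hc.
Qed.

Lemma SD_family {R : realType} {N} {I : finType} (phis : I -> 'rV[R]_N -> R) z0 k :
  (0 < k)%N -> (forall i, Ck k (phis i) z0) ->
  forall eps, 0 < eps -> exists2 del, 0 < del & forall z, `|z - z0| < del ->
    forall i, `|phis i z - phis i z0 - dot (gradv (phis i) z0) (z - z0)| <= eps * `|z - z0|.
Proof.
move=> k0 hC eps eps0.
pose P := fun i z => `|phis i z - phis i z0 - dot (gradv (phis i) z0) (z - z0)| <= eps * `|z - z0|.
have : \forall z \near z0, forall i, P i z.
  apply: (@filter_forall _ I P (nbhs z0)).
  move=> i.
  have [del del0 hd] := SDk _ _ k0 (hC i) _ eps0.
  apply: (@nbhs_normP R 'rV[R]_N z0 (P i)).2; exists del => // z /= hz.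
  apply: hd; first by rewrite distrC ltW.
  by rewrite subrr normr0 ltW.
move/nbhs_normP => [del del0 hd]; exists del => // z hz.
by apply: hd; rewrite /= distrC.
Qed.

Lemma ydir0 {R : realType} {n m} (ym : 'rV[R]_n -> 'rV[R]_m) x : ydir ym x 0 = 0.
Proof.
rewrite /ydir.
have -> : (fun t : R => t^-1 *: (ym (x + t *: 0) - ym x)) = (fun _ => 0).
  by apply/funext => t; rewrite scaler0 addr0 subrr scaler0.
by rewrite lim_cst.
Qed.

Lemma setdist_le {R : realType} {k} (v : 'rV[R]_k) A a : A a -> setdist v A <= enorm (v - a).
Proof.
move=> Aa; rewrite /setdist; apply: ge_inf; last by exists a.
by exists 0 => x [b _ <-]; exact: enorm_ge0.
Qed.

Lemma setdist_approx {R : realType} {k} (v : 'rV[R]_k) (A : set 'rV[R]_k) eps :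
  A !=set0 -> 0 < eps -> exists2 a, A a & enorm (v - a) < setdist v A + eps.
Proof.
move=> [a0 Aa0] eps0.
have hi : has_inf [set enorm (v - a) | a in A].
  split; first by exists (enorm (v - a0)), a0.
  by exists 0 => x [b _ <-]; exact: enorm_ge0.
have [e [a Aa <-] he] := inf_adherent eps0 hi.
by exists a.
Qed.
Lemma enormB {R : realType} {k} (a b : 'rV[R]_k) : enorm (a - b) = enorm (b - a).
Proof.
rewrite /enorm; congr Num.sqrt; apply: eq_bigr => i _.
by rewrite !mxE -sqrrN opprB.
Qed.

Lemma enorm_le {R : realType} {k} (v : 'rV[R]_k) (c : R) :
  `|v| <= c -> enorm v <= k%:R * c.
Proof.
move=> h; apply: le_trans (enorm_le_norm v) _.
by apply: ler_wpM2l.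
Qed.
Theorem theorem4p1 (R : realType) (n m p q r s : nat)
  (F : 'rV[R]_n -> 'rV[R]_m -> R) (H : 'rV[R]_n -> 'rV[R]_m -> 'rV[R]_p)
  (G : 'rV[R]_n -> 'rV[R]_m -> 'rV[R]_q)
  (f : 'rV[R]_n -> 'rV[R]_m -> R) (h : 'rV[R]_n -> 'rV[R]_m -> 'rV[R]_r)
  (g : 'rV[R]_n -> 'rV[R]_m -> 'rV[R]_s)
  (xs : 'rV[R]_n) (ys : 'rV[R]_m)
  (* smoothness *)
  (Hf : CkF 3 f xs ys) (Hg : CkV 3 g xs ys) (Hh : CkV 3 h xs ys)
  (HF : CkF 2 F xs ys) (HG : CkV 2 G xs ys) (HH : CkV 2 H xs ys)
  (* standing assumptions *)
  (Hys : Yset h g xs ys) (HLam : KKTmult f h g xs ys !=set0)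
  (* (A1)-(A3) *)
  (A1 : MFCQ h g xs ys) (A2 : SSOSC f h g xs ys) (A3 : CRCQ h g xs ys)
  (* the solution map y(.) *)
  (ym : 'rV[R]_n -> 'rV[R]_m) (dm em : R) (Hym : sol_map f h g xs ys dm em ym)
  (* bi-local solution *)
  (db eb : R) (Hbl : bilocal F H G f h g xs ys db eb) (Heb : eb <= em)
  (* MSCQ for Omega_1 *)
  (Hmscq : MSCQ H G ym xs) :
  lin_feas H G ym xs ys 0 /\
  forall d, lin_feas H G ym xs ys d -> lin_obj F ym xs ys 0 <= lin_obj F ym xs ys d.
Proof.
have [db0 [eb0 [PhiS [Ys [minS Hopt]]]]] := Hbl.
have [dm0 [em0 [ymS [Lip [Ddir Hsol]]]]] := Hym.
have [kap [rM [kap0 [rM0 HM]]]] := Hmscq.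
split.
  by rewrite /lin_feas ydir0; split => i; rewrite !dot0 ?addr0.
move=> d [feH feG].
rewrite /lin_obj ydir0 !dot0 addr0.
set v := ydir ym xs d.
set A := dot (gradx F xs ys) d + dot (grady F xs ys) v.
rewrite leNgt; apply/negP => Aneg.
set z0 := row_mx xs ys.
have xs0 : enorm (xs - xs) < dm by rewrite subrr enorm0.
have Hv : (fun t : R => t^-1 *: (ym (xs + t *: d) - ym xs)) @ 0^'+ --> v := Ddir xs xs0 d.
rewrite ymS in Hv.
have [rL [L [rL0 HL]]] := Lip xs xs0.
set Lp := `|L|.
have Lp0 : 0 <= Lp by exact: normr_ge0.
have HL' : forall x1 x2, enorm (x1 - xs) <= rL -> enorm (x2 - xs) <= rL ->
    enorm (ym x1 - ym x2) <= Lp * enorm (x1 - x2).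
  move=> x1 x2 h1 h2; apply: le_trans (HL x1 x2 h1 h2) _.
  by apply: ler_wpM2r; [exact: enorm_ge0 | exact: ler_norm].
set D := `|d|. set V := `|v|. set W := D + V + 1.
have D0 : 0 <= D by exact: normr_ge0.
have V0 : 0 <= V by exact: normr_ge0.
have W1 : 1 <= W by rewrite /W; lra.
set KF := gsum (gradv (unc F) z0).
set K := \sum_i gsum (gradv (unc (Defs.comp H i)) z0) + \sum_i gsum (gradv (unc (Defs.comp G i)) z0).
have KH : forall i, gsum (gradv (unc (Defs.comp H i)) z0) <= K.
  move=> i; apply: le_trans (_ : \sum_i gsum (gradv (unc (Defs.comp H i)) z0) <= K).
    by rewrite (bigD1 i) //= lerDl sumr_ge0 // => j _; exact: gsum_ge0.
  by rewrite lerDl sumr_ge0 // => j _; exact: gsum_ge0.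
have KG : forall i, gsum (gradv (unc (Defs.comp G i)) z0) <= K.
  move=> i; apply: le_trans (_ : \sum_i gsum (gradv (unc (Defs.comp G i)) z0) <= K).
    by rewrite (bigD1 i) //= lerDl sumr_ge0 // => j _; exact: gsum_ge0.
  by rewrite lerDr sumr_ge0 // => j _; exact: gsum_ge0.
have K0 : 0 <= K by rewrite addr_ge0 // sumr_ge0 // => j _; exact: gsum_ge0.
have KF0 : 0 <= KF by exact: gsum_ge0.
set PQ : R := (p + q)%:R.
have PQ0 : 0 <= PQ by exact: ler0n.
set Q := (KF + W) + (KF + 1) * (kap * PQ * (K + W) + 1) * (1 + Lp).
have Q0 : 0 < Q.
  have h1 : 0 <= KF + 1 by lra.
  have h2 : 0 <= kap * PQ * (K + W) + 1.
    have : 0 <= kap * PQ * (K + W) by rewrite !mulr_ge0 // ?ltW //; lra.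
    lra.
  have h3 : 0 <= 1 + Lp by lra.
  have : 0 <= (KF + 1) * (kap * PQ * (K + W) + 1) * (1 + Lp) by rewrite !mulr_ge0.
  rewrite /Q; lra.
set gm := Order.min 1 ((- A) / (2 * Q)).
have gm0 : 0 < gm by rewrite /gm lt_min ltr01 divr_gt0 // ?oppr_gt0 // mulr_gt0.
have gm1 : gm <= 1 by rewrite /gm ge_min lexx.
have gmQ : gm * Q < - A.
  have : gm <= (- A) / (2 * Q) by rewrite /gm ge_min lexx orbT.
  rewrite ler_pdivlMr ?mulr_gt0 // => hh.
  have : 0 < - A by rewrite oppr_gt0.
  lra.
set th := gm * (kap * PQ * (K + W) + 1).
have th0 : 0 <= th.
  rewrite /th mulr_ge0 ?ltW //.
  have : 0 <= kap * PQ * (K + W) by rewrite !mulr_ge0 // ?ltW //; lra.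
  lra.
have [dF dF0 HF'] := SDk (unc F) z0 (isT : (0 < 2)%N) HF _ gm0.
have [dH dH0 HHf] := SD_family (fun i => unc (Defs.comp H i)) z0 2 isT HH _ gm0.
have [dG dG0 HGf] := SD_family (fun i => unc (Defs.comp G i)) z0 2 isT HG _ gm0.
pose Pin := fun (i : 'I_q) (t : R) =>
  G xs ys 0 i < 0 -> t * (K * W + gm * (K + W)) <= - G xs ys 0 i / 2.
have evG : \forall t \near 0^'+, forall i, Pin i t.
  apply: (@filter_forall _ _ Pin ((0:R)^'+)).
  move=> i; have [hneg|hpos] := ltP (G xs ys 0 i) 0.
    near=> t => _; near: t; apply: small_t.
    by rewrite divr_gt0 // oppr_gt0.
  by near=> t; rewrite /Pin ltNge hpos.
have ev : \forall t \near 0^'+, 0 < t /\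
   `|v - t^-1 *: (ym (xs + t *: d) - ys)| <= gm /\
   t * (n%:R * D) <= rM /\ t * W <= dH / 2 /\ t * W <= dG / 2 /\
   t * (th * (1 + Lp) + W) <= dF /\
   t * (n%:R * (th + D)) <= rL /\ t * (n%:R * (th + D)) <= db /\
   t * (n%:R * (th + D)) <= dm /\ t * (Lp * (n%:R * (th + D))) <= eb /\
   (forall i, Pin i t).
  near=> t; do !split.
  - by near: t; exact: nbhs_right_gt.
  - by near: t; exact: (cvgrPdist_le _ _).1 Hv _ gm0.
  - by near: t; exact: small_t.
  - by near: t; apply: small_t; rewrite divr_gt0.
  - by near: t; apply: small_t; rewrite divr_gt0.
  - by near: t; exact: small_t.
  - by near: t; exact: small_t.
  - by near: t; exact: small_t.
  - by near: t; exact: small_t.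
  - by near: t; exact: small_t.
  - by near: t; exact: evG.
have [t [t0 [hu [c3 [c4 [c5 [c6 [c7 [c8 [c9 [c10 c11]]]]]]]]]]] := filter_ex ev.
set xt := xs + t *: d.
set yt := ym xt.
set u := t^-1 *: (yt - ys).
set zt := row_mx xt yt.
set w := row_mx d v.
have tn0 : t != 0 by rewrite gt_eqF.
have hxt : xt - xs = t *: d by rewrite /xt addrC addKr.
have hyt : yt - ys = t *: u by rewrite /u scalerA mulfV // scale1r.
have hzt : zt - z0 = t *: row_mx d u.
  by rewrite /zt /z0 opp_row_mx add_row_mx hxt hyt scale_row_mx.
have huv : `|u - v| <= gm by rewrite distrC.
have hwu : `|row_mx d u| <= W.
  apply: le_trans (norm_row_mx _ _) _.
  have : `|u| <= V + gm.
    have -> : u = v + (u - v) by rewrite addrC subrK.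
    by apply: le_trans (ler_normD _ _) _; rewrite lerD2l.
  rewrite /W /D /V; clear -gm1; lra.
have hww : `|row_mx d u - w| <= gm.
  rewrite /w opp_row_mx add_row_mx subrr.
  by apply: le_trans (norm_row_mx _ _) _; rewrite normr0 add0r.
have hw : `|w| <= W.
  apply: le_trans (norm_row_mx _ _) _; rewrite /W /D /V; clear -W1; lra.
have nzt : `|zt - z0| <= t * W.
  by rewrite hzt normrZ (ger0_norm (ltW t0)) ler_pM2l.
set nu := t * (gm * (K + W)).
have nu0 : 0 <= nu.
  rewrite /nu mulr_ge0 ?(ltW t0) // mulr_ge0 ?(ltW gm0) //; clear -K0 W1; lra.
have ztH : `|zt - z0| < dH by clear -nzt c4 dH0; lra.
have ztG : `|zt - z0| < dG by clear -nzt c5 dG0; lra.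
have hHi : forall i, `|H xt yt 0 i| <= nu.
  move=> i; have := HHf zt ztH i.
  move/(est1 (ltW t0) (ltW gm0) (KH i) hzt hwu hww).
  rewrite /w dot_grad (feH i) mulr0 subr0 /z0 /zt !unc_row /Defs.comp.
  by have [-> _] := PhiS; rewrite subr0.
have hGi : forall i, G xt yt 0 i <= 0 \/ G xt yt 0 i <= nu.
  move=> i; have := HGf zt ztG i.
  move/(est1 (ltW t0) (ltW gm0) (KG i) hzt hwu hww).
  rewrite /z0 /zt !unc_row /Defs.comp /nu.
  set cw := dot _ w.
  rewrite ler_norml => /andP[_ hest].
  have G0le : G xs ys 0 i <= 0 by have [_ ->] := PhiS.
  have [hneg|hpos] := ltP (G xs ys 0 i) 0.
    left; have hc := c11 i hneg.
    have hcw : t * cw <= t * (K * W).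
      rewrite ler_pM2l //; apply: le_trans (ler_norm _) _.
      apply: le_trans (dot_bound _ _) _.
      apply: ler_pM => //; [exact: gsum_ge0 | exact: KG].
    clear -hest hc hcw hneg; lra.
  right.
  have G00 : G xs ys 0 i = 0 by apply/eqP; rewrite eq_le G0le hpos.
  have := feG i G00; rewrite -dot_grad -/z0 -/w -/cw => hcw.
  have : t * cw <= 0 by rewrite pmulr_rle0.
  clear -hest G00; lra.
have ext : enorm (xt - xs) <= n%:R * (t * D).
  by apply: enorm_le; rewrite hxt normrZ (ger0_norm (ltW t0)).
have cxt : cball xs rM xt by rewrite /cball /=; clear -ext c3; lra.
have hdist : setdist (row_mx (H xt (ym xt)) (G xt (ym xt))) (@coneK R p q) <= PQ * nu.
  set a := row_mx (0 : 'rV[R]_p) (\row_i Order.min (G xt yt 0 i) 0).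
  have Ka : @coneK R p q a.
    split; first by rewrite /a row_mxKl.
    by move=> i; rewrite /a row_mxKr mxE ge_min lexx orbT.
  apply: le_trans (setdist_le _ _ _ Ka) _.
  apply: enorm_le; rewrite /a opp_row_mx add_row_mx; apply: norm_le_entries => // i.
  have [j ->|j ->] := split_ordP i.
    by rewrite row_mxEl !mxE subr0; exact: hHi.
  rewrite row_mxEr !mxE.
  have [hle|hgt] := leP (G xt yt 0 j) 0.
    by rewrite subrr normr0.
  rewrite subr0 gtr0_norm //.
  by case: (hGi j) => // hh; move: hgt; rewrite ltNge hh.
have hsd := le_trans (HM xt cxt) (ler_wpM2l (ltW kap0) hdist).
have Onz : Omega1 H G ym !=set0 by exists xs; rewrite /Omega1 /= ymS.
have tg0 : 0 < t * gm by rewrite mulr_gt0.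
have [xx Oxx hxx] := setdist_approx xt _ _ Onz tg0.
have exx : enorm (xt - xx) <= t * th.
  have -> : t * th = kap * (PQ * nu) + t * gm by rewrite /th /nu; ring.
  clear -hxx hsd; lra.
have nxx : `|xx - xt| <= t * th.
  by apply: le_trans (norm_le_enorm _) _; rewrite enormB.
have nxs : `|xx - xs| <= t * th + t * D.
  have -> : xx - xs = (xx - xt) + (xt - xs) by rewrite addrA subrK.
  apply: le_trans (ler_normD _ _) _; apply: lerD => //.
  by rewrite hxt normrZ (ger0_norm (ltW t0)).
have exs : enorm (xx - xs) <= t * (n%:R * (th + D)).
  have -> : t * (n%:R * (th + D)) = n%:R * (t * th + t * D) by ring.
  exact: enorm_le.
have ext' : enorm (xt - xs) <= rL.
  have : n%:R * (t * D) <= t * (n%:R * (th + D)).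
    rewrite mulrCA; apply: (ler_wpM2l (ltW t0)); apply: (ler_wpM2l (ler0n _ n)); clear -th0; lra.
  clear -ext c7; lra.
have exs' : enorm (xx - xs) <= rL by clear -exs c7; lra.
have hyy : enorm (ym xx - yt) <= Lp * (t * th).
  apply: le_trans (HL' xx xt exs' ext') _.
  by apply: ler_wpM2l => //; rewrite enormB.
set zz := row_mx xx (ym xx).
have nzz : `|zz - zt| <= t * th * (1 + Lp).
  rewrite /zz /zt opp_row_mx add_row_mx.
  apply: le_trans (norm_row_mx _ _) _.
  have : `|ym xx - yt| <= Lp * (t * th) by apply: le_trans (norm_le_enorm _) hyy.
  clear -nxx; lra.
have nzz0 : `|zz - z0| <= dF.
  have -> : zz - z0 = (zz - zt) + (zt - z0) by rewrite addrA subrK.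
  apply: le_trans (ler_normD _ _) _.
  clear -nzz nzt c6; lra.
have nzt0 : `|zt - z0| <= dF.
  have : t * W <= t * (th * (1 + Lp) + W).
    apply: ler_wpM2l; first exact: ltW.
    have : 0 <= th * (1 + Lp) by rewrite mulr_ge0 //; clear -Lp0; lra.
    clear -W1; lra.
  clear -nzt c6; lra.
have e1 := HF' zz zt nzz0 nzt0.
have z00 : `|z0 - z0| <= dF by rewrite subrr normr0 ltW.
have e2 := HF' zt z0 nzt0 z00.
move: e2 => /(est1 (ltW t0) (ltW gm0) (lexx KF) hzt hwu hww).
rewrite /w dot_grad -/A => e2.
have e3 := dot_bound (gradv (unc F) z0) (zz - zt).
rewrite -/KF in e3.
have key : unc F zz - unc F z0 <= t * (A + gm * Q).
  move: e1 e2 e3; rewrite !ler_norml => /andP[_ e1] /andP[_ e2] /andP[_ e3].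
  have e4 : gm * `|zz - zt| <= 1 * (t * th * (1 + Lp)).
    by apply: ler_pM => //; exact: ltW.
  have e5 : KF * `|zz - zt| <= KF * (t * th * (1 + Lp)) by apply: ler_wpM2l.
  have -> : t * (A + gm * Q) = t * A + t * (gm * (KF + W)) + (KF + 1) * (t * th * (1 + Lp)).
    by rewrite /Q /th; ring.
  clear -e1 e2 e3 e4 e5; lra.
have neg : t * (A + gm * Q) < 0 by rewrite pmulr_rlt0 //; clear -gmQ; lra.
have cxxm : cball xs dm xx by rewrite /cball /=; clear -exs c9; lra.
have [[Yxx _] [minxx _]] := Hsol xx cxxm.
have eyy : enorm (ym xx - ys) <= eb.
  rewrite -ymS; apply: le_trans (HL' xx xs exs' _) _.
    by rewrite subrr enorm0 ltW.
  apply: le_trans (_ : Lp * (t * (n%:R * (th + D))) <= eb); last by rewrite mulrCA.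
  by apply: ler_wpM2l.
have hb := Hopt xx (ym xx).
have : F xs ys <= F xx (ym xx).
  apply: hb => //.
  - by rewrite /cball /=; clear -exs c8; lra.
  - move=> y' [Yy' cy']; apply: minxx; split => //.
    by rewrite /cball /= in cy' *; clear -cy' Heb; lra.
rewrite -(unc_row F xs ys) -(unc_row F xx (ym xx)) -/z0 -/zz.
clear -key neg; lra.
Unshelve. all: by end_near.
Qed.
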